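(* Let $m$ be an element of the monoid $M$. Then there exists a representative $w_0\in\Sigma^*$ of $m$ in which every pair of consecutive letters is of one of the forms: $c_ic_j$ with $i\ge j-1$; $c_it_{j\,j+1}$ with $i\ge j-1$; $t_{i\,i+1}c_j$ with $i\ge j-2$; or $t_{i\,i+1}t_{j\,j+1}$ with $i\ge j-2$. Furthermore: (i) this representative $w_0$ is unique, and it is the lexicographically maximal representative of $m$ with respect to the total order $c_1<t_{12}<c_2<t_{23}<c_3<\cdots$ on $\Sigma$; (ii) if $w_0$ starts with $c_1$ or $t_{12}$, then every representative $w\in\Sigma^*$ of $m$ starts with $c_1$ or $t_{12}$; (iii) if $w_0$ contains no factor of the form $c_ic_i$ ($i\ge1$), then no representative $w\in\Sigma^*$ of $m$ contains a factor of this form.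
   Context: Let $\Sigma=\{c_1,c_2,\dots\}\cup\{t_{12},t_{23},\dots,t_{i\,i+1},\dots\}$ be a countable alphabet, $\Sigma^*$ the free monoid on $\Sigma$, and $M$ the free partially commutative monoid obtained from $\Sigma^*$ by imposing the commutation relations $c_ic_j=c_jc_i$ if $|i-j|\ge2$; $c_it_{j\,j+1}=t_{j\,j+1}c_i$ if $i\le j-2$ or $i\ge j+3$; $t_{i\,i+1}t_{j\,j+1}=t_{j\,j+1}t_{i\,i+1}$ if $|i-j|\ge3$. A representative of $m\in M$ is a word in $\Sigma^*$ whose image in $M$ is $m$ (all representatives have the same length). A factor of a word is a block of consecutive letters. *)

(* Defs.v *)
From Stdlib Require Import Relations List.
From mathcomp Require Import all_boot.
Set Implicit Arguments. Unset Strict Implicit. Unset Printing Implicit Defensive.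

(* Letters: [c i] is c_i and [t i] is t_{i,i+1}; the alphabet Sigma consists
   of the letters with index i >= 1 (see [valid_letter]). *)
Inductive letter : Type := c of nat | t of nat.

Definition index (a : letter) : nat := match a with c i => i | t i => i end.
Definition valid_letter (a : letter) : Prop := 1 <= index a.
Definition valid_word (w : seq letter) : Prop := forall a, List.In a w -> valid_letter a.

Definition commute (a b : letter) : Prop :=
  match a, b with
  | c i, c j => i + 2 <= j \/ j + 2 <= i
  | c i, t j => i + 2 <= j \/ j + 3 <= i
  | t j, c i => i + 2 <= j \/ j + 3 <= i
  | t i, t j => i + 3 <= j \/ j + 3 <= i
  end.

Definition swap_step (u v : seq letter) : Prop :=
  exists p q a b, commute a b /\ u = p ++ a :: b :: q /\ v = p ++ b :: a :: q.

Definition equivM : relation (seq letter) := clos_refl_trans _ swap_step.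

(* Allowed consecutive pairs of letters (indices in Z: i >= j-1 etc.). *)
Definition good_pair (a b : letter) : Prop :=
  match a, b with
  | c i, c j => j <= i + 1
  | c i, t j => j <= i + 1
  | t i, c j => j <= i + 2
  | t i, t j => j <= i + 2
  end.

Definition good_word (w : seq letter) : Prop :=
  forall p q a b, w = p ++ a :: b :: q -> good_pair a b.

(* Total order c_1 < t_12 < c_2 < t_23 < ... via ranks. *)
Definition rank (a : letter) : nat := match a with c i => 2 * i | t i => 2 * i + 1 end.

Fixpoint lex_le (u v : seq letter) : Prop :=
  match u, v with
  | [::], _ => True
  | _ :: _, [::] => False
  | a :: u', b :: v' => rank a < rank b \/ (a = b /\ lex_le u' v')
  end.

Definition starts_c1_t12 (w : seq letter) : Prop :=
  match w with c 1 :: _ | t 1 :: _ => True | _ => False end.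

Definition has_cc_factor (w : seq letter) : Prop :=
  exists p q i, w = p ++ c i :: c i :: q.

(* Main.v *)
Require Import Defs.
From Stdlib Require Import Relations List Classical.
From mathcomp Require Import all_boot zify.
Set Implicit Arguments. Unset Strict Implicit.
Local Notation comm := Defs.commute.
Local Notation rk := Defs.rank.

Lemma commute_sym a b : comm a b -> comm b a.
Proof. case: a => i; case: b => j /=; lia. Qed.
Lemma commute_irr a : ~ comm a a.
Proof. case: a => i /=; lia. Qed.
Lemma rank_inj a b : rk a = rk b -> a = b.
Proof. case: a => i; case: b => j /= H; f_equal; lia. Qed.
Lemma K1 a b : good_pair a b -> comm a b -> rk b < rk a.
Proof. case: a => i; case: b => j /=; lia. Qed.
Lemma K2 a b : ~ good_pair a b -> comm a b /\ rk a < rk b.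
Proof. case: a => i; case: b => j /=; lia. Qed.
Lemma K3 y z a : comm y a -> comm z a -> rk y < rk a -> rk a < rk z -> comm y z.
Proof. case: y => i; case: z => j; case: a => k /=; lia. Qed.

Definition leqb (a b : letter) : bool :=
  match a, b with c i, c j => i == j | t i, t j => i == j | _, _ => false end.
Lemma leqb_iff a b : leqb a b = true <-> a = b.
Proof. case: a => i; case: b => j /=; split => //.
- by move/eqP => ->.
- by case => ->; rewrite eqxx.
- by move/eqP => ->.
- by case => ->; rewrite eqxx.
Qed.
Lemma leqb_refl a : leqb a a = true.
Proof. by apply/leqb_iff. Qed.
Lemma letter_dec (a b : letter) : {a = b} + {a <> b}.
Proof. decide equality; apply: PeanoNat.Nat.eq_dec. Qed.

Definition P x y l := leqb l x || leqb l y.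
Definition proj x y w := filter (P x y) w.
Definition same_proj u v := forall x y, ~ comm x y -> proj x y u = proj x y v.

Lemma swap_proj p q a b : comm a b -> same_proj (p ++ a :: b :: q) (p ++ b :: a :: q).
Proof.
move=> hab x y hxy; rewrite /proj !filter_cat /=.
case ea: (P x y a); case eb: (P x y b) => //.
exfalso; move: ea eb; rewrite /P.
case/orP => /leqb_iff E1; case/orP => /leqb_iff E; subst.
all: first [by move: hab; apply: commute_irr | by apply: hxy | by apply: hxy; apply: commute_sym].
Qed.

Lemma equiv_proj u v : equivM u v -> same_proj u v.
Proof.
elim => {u v}.
- move=> u v [p [q [a [b [h [-> ->]]]]]]; exact: swap_proj.
- by move=> u x y.
- move=> u v w _ H1 _ H2 x y h; by rewrite H1 // H2.
Qed.

Lemma good_tail a u : good_word (a :: u) -> good_word u.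
Proof. move=> H p q x y E; apply: (H (a :: p) q); by rewrite E. Qed.

Lemma chain l : forall y a rest, good_word (y :: l ++ a :: rest) ->
  (forall z, List.In z (y :: l) -> comm z a) -> rk y < rk a -> False.
Proof.
elim: l => [|z l IH] y a rest G C lt.
- have := K1 (G [::] rest y a erefl) (C y (or_introl erefl)). lia.
- have gyz := G [::] (l ++ a :: rest) y z erefl.
  have cza : comm z a by apply: C; right; left.
  case: (ltngtP (rk z) (rk a)) => h.
  + apply: (IH z a rest (good_tail G)) => // w hw; apply: C; by right.
  + have cyz := K3 (C y (or_introl erefl)) cza lt h.
    have := K1 gyz cyz. lia.
  + move/rank_inj: h => E; subst; by move: cza; apply: commute_irr.
Qed.

Lemma In_filter (Q : pred letter) z l : List.In z (filter Q l) -> List.In z l.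
Proof.
elim: l => //= h l IH; case: (Q h) => /= H.
- case: H => [E|H]; [left; exact: E | right; exact: IH].
- right; exact: IH.
Qed.

Lemma first_split a v : List.In a v -> exists v1 v2 : seq letter, v = v1 ++ a :: v2 /\ ~ List.In a v1.
Proof.
elim: v => //= h v IH [->|H].
- by exists [::], v; split.
- case: (letter_dec h a) => [->|ne]; first by exists [::], v; split.
  have [v1 [v2 [-> nin]]] := IH H.
  exists (h :: v1), v2; split => //= [[]]; auto.
Qed.

Lemma head_filter z a l r : List.In z l -> ~ List.In a l ->
  exists s, filter (P z a) (l ++ r) = z :: s.
Proof.
elim: l => //= h l IH hz ha.
case: (letter_dec h z) => [E|ne].
- subst; rewrite /P. have -> : leqb z z = true by apply/leqb_iff. by eexists.
- have -> : P z a h = false.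
    rewrite /P; apply/negbTE/negP; case/orP => /leqb_iff E; subst; tauto.
  apply: IH; tauto.
Qed.

Lemma diff_head a u b v : a <> b -> same_proj (a :: u) (b :: v) ->
  good_word (b :: v) -> rk b < rk a -> False.
Proof.
move=> ne S G lt.
have hin : List.In a v.
  have E := S a a (@commute_irr a).
  have : List.In a (proj a a (b :: v)) by rewrite -E /proj /= /P leqb_refl; left.
  move/In_filter => [E'|//]; by subst.
have [v1 [v2 [Ev nin]]] := first_split hin; subst v.
have C : forall z, List.In z (b :: v1) -> comm z a.
  move=> z hz; apply: NNPP => ncz.
  have nin' : ~ List.In a (b :: v1) by move=> [E|]; [subst|].
  have [s Es] := head_filter (a :: v2) hz nin'.
  have := S z a ncz; rewrite /proj -cat_cons Es /= /P.
  have -> : leqb a a = true by apply/leqb_iff.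
  rewrite orbT => -[E _]; subst; apply: nin'; exact: hz.
exact: (chain G C lt).
Qed.

Lemma same_proj_sym u v : same_proj u v -> same_proj v u.
Proof. move=> S x y h; by rewrite S. Qed.

Lemma uniq_good u : forall v, same_proj u v -> good_word u -> good_word v -> u = v.
Proof.
elim: u => [|a u IH] [|b v] // S Gu Gv.
- have := S b b (@commute_irr b); rewrite /proj /= /P.
  by have -> : leqb b b = true by apply/leqb_iff.
- have := S a a (@commute_irr a); rewrite /proj /= /P.
  by have -> : leqb a a = true by apply/leqb_iff.
- case: (letter_dec a b) => [E|ne].
  + subst; f_equal; apply: IH; [|exact: good_tail Gu|exact: good_tail Gv].
    move=> x y h; have := S x y h; rewrite /proj /=.
    by case: (P x y b) => // -[].
  + case: (ltngtP (rk a) (rk b)) => h.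
    * exfalso; exact: (diff_head (not_eq_sym ne) (same_proj_sym S) Gu h).
    * exfalso; exact: (diff_head ne S Gv h).
    * by move/rank_inj: h.
Qed.

Definition commb (a b : letter) : bool :=
  match a, b with
  | c i, c j => (i + 2 <= j) || (j + 2 <= i)
  | c i, t j => (i + 2 <= j) || (j + 3 <= i)
  | t j, c i => (i + 2 <= j) || (j + 3 <= i)
  | t i, t j => (i + 3 <= j) || (j + 3 <= i)
  end.
Lemma commbP a b : commb a b = true <-> comm a b.
Proof. case: a => i; case: b => j /=; split; move=> H; lia. Qed.

Fixpoint inv (w : seq letter) : nat :=
  match w with [::] => 0 | a :: r => count (fun b => commb a b && (rk a < rk b)) r + inv r end.

Lemma inv_swap p q a b : comm a b -> rk a < rk b ->
  inv (p ++ a :: b :: q) = (inv (p ++ b :: a :: q)).+1.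
Proof.
move=> hab lt; elim: p => [|x p IH] /=.
- have -> : commb a b = true by apply/commbP.
  have -> : rk b < rk a = false by apply/negbTE; rewrite -leqNgt ltnW.
  rewrite andbF /=. lia.
- rewrite IH !count_cat /=. lia.
Qed.

Definition upstep (u v : seq letter) : Prop :=
  exists p q a b, comm a b /\ rk a < rk b /\ u = p ++ a :: b :: q /\ v = p ++ b :: a :: q.

Lemma upstep_inv u v : upstep u v -> inv v < inv u.
Proof. move=> [p [q [a [b [h1 [h2 [-> ->]]]]]]]; rewrite (@inv_swap p q a b h1 h2); exact: ltnSn. Qed.

Lemma up_progress w : ~ good_word w -> exists v, upstep w v.
Proof.
move=> ng; apply: NNPP => nex; apply: ng => p q a b E; apply: NNPP => ngp.
apply: nex; have [h1 h2] := K2 ngp; exists (p ++ b :: a :: q), p, q, a, b; tauto.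
Qed.

Notation rtc := (clos_refl_trans (seq letter) upstep).

Lemma reach n : forall w, inv w < n -> exists v, rtc w v /\ good_word v.
Proof.
elim: n => [|n IH] w // hn.
case: (classic (good_word w)) => G.
- exists w; split => //; exact: rt_refl.
- have [w1 H1] := up_progress G.
  have := upstep_inv H1 => lt.
  have [v [R Gv]] := IH w1 (leq_trans lt (hn : inv w < n.+1)).
  exists v; split => //; apply: rt_trans (rt_step _ _ _ _ H1) R.
Qed.

Lemma split2 (p q p' q' : seq letter) a b x y : p ++ a :: b :: q = p' ++ x :: y :: q' ->
 (exists m, p' = p ++ a :: b :: m /\ q = m ++ x :: y :: q') \/
 (exists m, p = p' ++ x :: y :: m /\ q' = m ++ a :: b :: q) \/
 (p = p' /\ a = x /\ b = y /\ q = q') \/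
 (p = p' ++ [:: x] /\ a = y /\ q' = b :: q) \/
 (p' = p ++ [:: a] /\ x = b /\ q = y :: q').
Proof.
elim: p p' => [|z p IH] [|z1 p1] /=.
- case=> -> -> ->; tauto.
- case=> -> ; case: p1 => [|z2 p2] /=.
  + case=> -> ->; tauto.
  + case=> -> ->; left; by exists p2.
- clear IH; case=> -> ; case: p => [|z2 p2] /=.
  + case=> -> <-; tauto.
  + case=> -> <-; right; left; by exists p2.
- case=> -> /IH [[m [-> ->]]|[[m [-> ->]]|[[-> [-> [-> ->]]]|[[-> [-> ->]]|[-> [-> ->]]]]]].
  + left; by exists m.
  + right; left; by exists m.
  + tauto.
  + tauto.
  + tauto.
Qed.

Lemma up1 p q a b : comm a b -> rk a < rk b -> upstep (p ++ a :: b :: q) (p ++ b :: a :: q).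
Proof. move=> h1 h2; exists p, q, a, b; tauto. Qed.

Lemma reach_cc n : forall w, inv w < n -> has_cc_factor w ->
  exists v, rtc w v /\ good_word v /\ has_cc_factor v.
Proof.
elim: n => [|n IH] w // hn hcc.
case: (classic (good_word w)) => G.
- exists w; split => //; exact: rt_refl.
- have [w1 H1] := up_progress G.
  suff [w2 [R2 [lt2 cc2]]] : exists w2, rtc w w2 /\ inv w2 < inv w /\ has_cc_factor w2.
    have [v [R [Gv cv]]] := IH w2 (leq_trans lt2 (hn : inv w < n.+1)) cc2.
    exists v; split => //; exact: rt_trans R2 R.
  move: H1 => [p [q [a [b [hab [lt [Ew Ew1]]]]]]].
  move: hcc => [p' [q' [i Ec]]].
  have := Ec; rewrite Ew => /split2.
  case=> [[m [E1 E2]]|[[m [E1 E2]]|[[E1 [E2 [E3 E4]]]|[[E1 [E2 E3]]|[E1 [E2 E3]]]]]]; subst.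
  + exists (p ++ b :: a :: m ++ c i :: c i :: q').
    split; first by apply: rt_step; apply: up1.
    split; first by apply: upstep_inv; apply: up1.
    by exists (p ++ b :: a :: m), q', i; rewrite -catA.
  + exists ((p' ++ c i :: c i :: m) ++ b :: a :: q).
    split; first by apply: rt_step; apply: up1.
    split; first by apply: upstep_inv; apply: up1.
    by exists p', (m ++ b :: a :: q), i; rewrite -catA.
  + exfalso; by move: hab; apply: commute_irr.
  + (* w = p' ++ c i :: c i :: b :: q *)
    have E1 : (p' ++ [:: c i]) ++ c i :: b :: q = p' ++ c i :: c i :: b :: q by rewrite -catA.
    have E2 : (p' ++ [:: c i]) ++ b :: c i :: q = p' ++ c i :: b :: c i :: q by rewrite -catA.
    have S1 : upstep ((p' ++ [:: c i]) ++ c i :: b :: q) ((p' ++ [:: c i]) ++ b :: c i :: q) by apply: up1.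
    have S2 : upstep (p' ++ c i :: b :: c i :: q) (p' ++ b :: c i :: c i :: q) by apply: up1.
    rewrite E1 E2 in S1; rewrite E1.
    exists (p' ++ b :: c i :: c i :: q); split.
    * apply: rt_trans; [apply: rt_step; exact: S1 | apply: rt_step; exact: S2].
    * split; first by have := upstep_inv S1; have := upstep_inv S2; lia.
      by exists (p' ++ [:: b]), q, i; rewrite -catA.
  + (* w = p ++ a :: c i :: c i :: q' *)
    have S1 : upstep (p ++ a :: c i :: c i :: q') (p ++ c i :: a :: c i :: q') by apply: up1.
    have E1 : (p ++ [:: c i]) ++ a :: c i :: q' = p ++ c i :: a :: c i :: q' by rewrite -catA.
    have E2 : (p ++ [:: c i]) ++ c i :: a :: q' = p ++ c i :: c i :: a :: q' by rewrite -catA.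
    have S2 : upstep ((p ++ [:: c i]) ++ a :: c i :: q') ((p ++ [:: c i]) ++ c i :: a :: q') by apply: up1.
    rewrite E1 E2 in S2.
    exists (p ++ c i :: c i :: a :: q'); split.
    * apply: rt_trans; [apply: rt_step; exact: S1 | apply: rt_step; exact: S2].
    * split; first by have := upstep_inv S1; have := upstep_inv S2; lia.
      by exists p, (a :: q'), i.
Qed.

Lemma rtc_equiv u v : rtc u v -> equivM u v.
Proof.
elim => {u v}.
- move=> u v [p [q [a [b [h1 [h2 [-> ->]]]]]]]; apply: rt_step; exists p, q, a, b; tauto.
- move=> u; exact: rt_refl.
- move=> u v w _ H1 _ H2; exact: rt_trans H1 H2.
Qed.

Lemma lex_refl u : lex_le u u.
Proof. elim: u => //= a u IH; by right. Qed.

Lemma lex_trans u : forall v w, lex_le u v -> lex_le v w -> lex_le u w.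
Proof.
elim: u => [|a u IH] [|b v] [|x w] //=.
move=> [h1|[E1 h1]] [h2|[E2 h2]]; subst.
- left; exact: ltn_trans h1 h2.
- by left.
- by left.
- right; split => //; exact: IH h1 h2.
Qed.

Lemma up_lex u v : upstep u v -> lex_le u v.
Proof.
move=> [p [q [a [b [h1 [h2 [-> ->]]]]]]].
elim: p => [|x p IH] /=; [by left | right; split => //].
Qed.

Lemma rtc_lex u v : rtc u v -> lex_le u v.
Proof.
elim => {u v}.
- move=> u v; exact: up_lex.
- move=> u; exact: lex_refl.
- move=> u v w _ H1 _ H2; exact: lex_trans H1 H2.
Qed.

Definition Qw (w : seq letter) : Prop := w = [::] \/ exists a r, w = a :: r /\ 4 <= rk a.

Lemma rtc_Q u v : rtc u v -> Qw u -> Qw v.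
Proof.
elim => {u v}.
- move=> u v [p [q [a [b [h1 [h2 [-> ->]]]]]]].
  case: p => [|x p] /=.
  + move=> [//|[a' [r [[<- _] h]]]]; right; exists b, (a :: q); split => //; exact: leq_trans h (ltnW h2).
  + move=> [//|[a' [r [[<- _] h]]]]; right; by exists x, (p ++ b :: a :: q).
- by [].
- move=> u v w _ H1 _ H2 Q; exact: H2 (H1 Q).
Qed.

Lemma equiv_in u v : equivM u v -> forall z, List.In z v -> List.In z u.
Proof.
elim => {u v}.
- move=> u v [p [q [a [b [h1 [-> ->]]]]]] z.
  rewrite !List.in_app_iff /=; tauto.
- by [].
- move=> u v w _ H1 _ H2 z h; exact: H1 (H2 z h).
Qed.

(* An element m of M is given by any representative word w. *)
Theorem theorem3p12 (w : seq letter) (hw : valid_word w) :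
  exists w0 : seq letter,
    equivM w w0 /\ good_word w0 /\
    (* (i) uniqueness and lexicographic maximality *)
    (forall w', equivM w w' -> good_word w' -> w' = w0) /\
    (forall w', equivM w w' -> lex_le w' w0) /\
    (* (ii) *)
    (starts_c1_t12 w0 -> forall w', equivM w w' -> starts_c1_t12 w') /\
    (* (iii) *)
    (~ has_cc_factor w0 -> forall w', equivM w w' -> ~ has_cc_factor w').
Proof.
have [w0 [R G]] := reach (ltnSn (inv w)).
have E0 := rtc_equiv R.
have U : forall w', equivM w w' -> good_word w' -> w' = w0.
  move=> w' E G'; apply: uniq_good G' G => x y h.
  by rewrite -(equiv_proj E h) (equiv_proj E0 h).
exists w0; split => //; split => //; split => //; split; [|split].
- move=> w' E; have [v [Rv Gv]] := reach (ltnSn (inv w')).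
  have Ev : equivM w v := rt_trans _ _ _ _ _ E (rtc_equiv Rv).
  rewrite -(U v Ev Gv); exact: rtc_lex Rv.
- move=> S w' E; apply: NNPP => nS.
  have vw' : valid_word w'.
    move=> z hz; apply: hw.

 exact: (equiv_in E hz).
  have Q' : Qw w'.
    case: w' E nS vw' => [|a r] E nS vw'; first by left.
    clear E; right; exists a, r; split => //.
    have := vw' a (or_introl erefl); rewrite /valid_letter; clear vw'.
    case: a nS => [[|[|i]]|[|[|i]]] /=; intros h1 h2; try lia; exfalso; apply: h1; exact: I.
  have [v [Rv Gv]] := reach (ltnSn (inv w')).
  have Ev : equivM w v := rt_trans _ _ _ _ _ E (rtc_equiv Rv).
  have := rtc_Q Rv Q'; rewrite (U v Ev Gv).
  case => [E1|[a [r [E1 h]]]]; subst; first by [].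
  clear -h S; move: h S; case: a => [[|[|i]]|[|[|i]]] /= h S; try lia; done.
- move=> ncc w' E hcc.
  have [v [Rv [Gv cv]]] := reach_cc (ltnSn (inv w')) hcc.
  have Ev : equivM w v := rt_trans _ _ _ _ _ E (rtc_equiv Rv).
  apply: ncc; by rewrite -(U v Ev Gv).
Qed.
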